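(* For Pólya trees $t$ let $S_t$, $T$ be as in the context. Then \[ \sum_{\substack{t \in \mathcal{P}_{\le n}\\ |t| \ge \log n}} \left(1 - \frac{[z^n]S_t(z)}{[z^n]T(z)}\right) = \Omega\!\left(\sqrt{n}\right) \quad \text{as } n\to\infty, \] where $\log$ denotes the logarithm to base $1/\sigma$.
   Context: A recursive tree of size $n$ is a rooted non-plane tree with $n$ nodes labeled $1,\dots,n$ with labels increasing along every path from the root; their exponential generating function is $T(z)=\ln\frac{1}{1-z}$, so $[z^n]T(z)=1/n$. A Pólya tree is an unlabeled rooted non-plane tree; $\mathcal{P}_{\le n}$ is the set of Pólya trees with at most $n$ nodes; $\sigma\approx 0.338$ is the radius of convergence of the ordinary generating function of Pólya trees. A fringe subtree is a node together with all its descendants; its shape is the Pólya tree obtained by forgetting labels. For a Pólya tree $t$ with $k$ nodes, $\ell(t)$ is the number of increasing labelings of $t$ by $1,\dots,k$, $w(t)=\ell(t)/k!$ and $P_t(z)=w(t)z^k$. $S_t(z)$ is the exponential generating function of recursive trees having no fringe subtree of shape $t$; it is the solution of $S_t'(z)=\exp(S_t(z))-P_t'(z)$, $S_t(0)=0$, explicitly $S_t(z)=\ln\frac{1}{1-\int_0^z e^{-P_t(v)}\,dv}-P_t(z)$. *)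

(* Defs.v *)
From Stdlib Require Import Reals.
From Coquelicot Require Import Rbar Hierarchy PSeries.
From HB Require Import structures.
From mathcomp Require Import all_boot.

Set Implicit Arguments.
Unset Strict Implicit.
Unset Printing Implicit Defensive.
Local Open Scope nat_scope.

(* Rooted trees.  A [tree] is a rooted *plane* tree (ordered children); *)
(* Pólya trees (unlabeled rooted non-plane trees) are the isomorphism   *)
(* classes, represented below by canonical forms.                      *)
Inductive tree := Node of seq tree.

Fixpoint tree_to_gen (t : tree) : GenTree.tree unit :=
  let: Node l := t in GenTree.Node 0 (map tree_to_gen l).

Fixpoint gen_to_tree (g : GenTree.tree unit) : tree :=
  match g with
  | GenTree.Leaf _ => Node [::]
  | GenTree.Node _ l => Node (map gen_to_tree l)
  end.

Lemma tree_to_genK : cancel tree_to_gen gen_to_tree.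
Proof.
rewrite /cancel; fix IH 1; case=> l /=; congr Node.
move: l; fix IHl 1; case=> [|a l] //=.
by rewrite IH IHl.
Qed.

HB.instance Definition _ := Countable.copy tree (can_type tree_to_genK).

Fixpoint tree_size (t : tree) : nat :=
  let: Node l := t in (sumn (map tree_size l)).+1.

Definition tree_le (a b : tree) : bool := (pickle a <= pickle b)%N.

Fixpoint canon (t : tree) : tree :=
  let: Node l := t in Node (sort tree_le (map canon l)).

Definition same_shape (a b : tree) : bool := canon a == canon b.

Definition polya (t : tree) : bool := canon t == t.

Definition enumerates_polya (e : nat -> seq tree) : Prop :=
  forall n, uniq (e n) /\ forall t, (t \in e n) = polya t && (tree_size t <= n)%N.

Definition polya_count (e : nat -> seq tree) (k : nat) : nat :=
  count (fun t => tree_size t == k) (e k).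

Definition sigma_of (e : nat -> seq tree) : R :=
  real (CV_radius (fun k => INR (polya_count e k))).

(* Recursive trees of size n.  Nodes are 'I_n (label i+1 <-> i); such a *)
(* tree is its parent map f, with f 0 = 0 (root) and f i < i otherwise. *)
Definition is_rectree (n : nat) (f : {ffun 'I_n -> 'I_n}) : bool :=
  (0 < n)%N && [forall i : 'I_n,
     if (i == 0 :> nat) then f i == i else (f i < i)%N].

Definition children (n : nat) (f : {ffun 'I_n -> 'I_n}) (v : 'I_n) : seq 'I_n :=
  [seq u : 'I_n <- enum 'I_n | (val v < val u)%N && (f u == v)].

Fixpoint shape_aux (n : nat) (f : {ffun 'I_n -> 'I_n}) (k : nat) (v : 'I_n)
  : tree :=
  match k with
  | 0 => Node [::]
  | k'.+1 => Node (map (shape_aux f k') (children f v))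
  end.

(* shape of the fringe subtree rooted at v (fuel n suffices: depth < n) *)
Definition fringe_shape (n : nat) (f : {ffun 'I_n -> 'I_n}) (v : 'I_n) : tree :=
  shape_aux f n v.

Definition has_fringe (n : nat) (f : {ffun 'I_n -> 'I_n}) (t : tree) : bool :=
  [exists v : 'I_n, same_shape (fringe_shape f v) t].

(* [z^n] T(z): EGF coefficient of recursive trees (= 1/n for n >= 1) *)
Definition coef_T (n : nat) : R :=
  Rdiv (INR #|[set f : {ffun 'I_n -> 'I_n} | is_rectree f]|) (INR n`!).

Definition coef_S (t : tree) (n : nat) : R :=
  Rdiv (INR #|[set f : {ffun 'I_n -> 'I_n} | is_rectree f && ~~ has_fringe f t]|)
       (INR n`!).

Definition Rleb (x y : R) : bool := if Rle_dec x y then true else false.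

Definition log_base (b x : R) : R := Rdiv (ln x) (ln b).

(* Main.v *)
Require Import Defs.
From Stdlib Require Import Reals Lra Psatz.
From HB Require Import structures.
From mathcomp Require Import all_boot zify.
Set Implicit Arguments.
Unset Strict Implicit.
Unset Printing Implicit Defensive.

Lemma sumn_mapE (T : Type) (g : T -> nat) (s : seq T) :
  sumn (map g s) = \sum_(x <- s) g x.
Proof. by elim: s => [|a s IH] /=; rewrite ?big_nil ?big_cons ?IH. Qed.

Lemma tree_ind2 (P : tree -> Prop) :
  (forall l, (forall x, x \in l -> P x) -> P (Node l)) -> forall t, P t.
Proof.
move=> H; fix IH 1; case=> l; apply: H.
move: l; fix IHl 1; case=> [|a l] x hx.
  exfalso; by rewrite in_nil in hx.
rewrite inE in hx; case/orP: hx => [/eqP Hx|hx].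
  rewrite Hx; exact: (IH a).
exact: (IHl l x hx).
Qed.

Lemma tree_le_total : total tree_le.
Proof. by move=> a b; rewrite /tree_le leq_total. Qed.
Lemma tree_le_trans : transitive tree_le.
Proof. by move=> a b c; rewrite /tree_le; apply: leq_trans. Qed.

Lemma size_canon t : tree_size (canon t) = tree_size t.
Proof.
elim/tree_ind2: t => l IH /=; congr S.
rewrite !sumn_mapE (perm_big _ (permEl (perm_sort _ _))) /= big_map.
by apply: eq_big_seq => x /IH.
Qed.

Lemma canon_idem t : canon (canon t) = canon t.
Proof.
elim/tree_ind2: t => l IH /=; congr Node.
have -> : map canon (sort tree_le (map canon l)) = sort tree_le (map canon l).
  rewrite -[RHS]map_id; apply/eq_in_map => x.
  rewrite mem_sort => /mapP [y yl ->]; exact: IH.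
apply: sorted_sort; first exact: tree_le_trans.
apply: sort_sorted; exact: tree_le_total.
Qed.

Section Anc.
Variable n : nat.
Implicit Types f : {ffun 'I_n -> 'I_n}.

Definition anc f (v w : 'I_n) : bool := [exists j : 'I_n, iter j f w == v].
Definition sz f (v : 'I_n) : nat := \sum_(w : 'I_n) anc f v w.

Variable f : {ffun 'I_n -> 'I_n}.
Hypothesis Hf : is_rectree f.

Lemma rt_pos : 0 < n.
Proof. by case/andP: Hf. Qed.

Lemma rt0 (i : 'I_n) : nat_of_ord i = 0 -> f i = i.
Proof.
move=> i0; case/andP: Hf => _ /forallP /(_ i); rewrite i0 eqxx.
by move/eqP.
Qed.

Lemma rtlt (i : 'I_n) : nat_of_ord i != 0 -> f i < i.
Proof.
move=> i0; case/andP: Hf => _ /forallP /(_ i).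
by rewrite (negbTE i0).
Qed.

Lemma rtle (i : 'I_n) : f i <= i - 1.
Proof.
case: (eqVneq (nat_of_ord i) 0) => [i0|i0]; first by rewrite rt0 // i0.
have := rtlt i0; lia.
Qed.

Lemma iter_le j (w : 'I_n) : nat_of_ord (iter j f w) <= w - j.
Proof.
elim: j => [|j IH]; first by rewrite subn0.
rewrite iterS; have := rtle (iter j f w); lia.
Qed.

Lemma iter_big j (w : 'I_n) : w <= j -> nat_of_ord (iter j f w) = 0.
Proof. by move=> h; have := iter_le j w; lia. Qed.

Lemma ancP v w : reflect (exists j, iter j f w = v) (anc f v w).
Proof.
apply: (iffP existsP) => [[j /eqP <-]|[j <-]]; first by exists j.
have n0 := rt_pos.
case: (ltnP j n) => jn; first by exists (Ordinal jn).
have np : n.-1 < n by rewrite prednK.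
exists (Ordinal np); apply/eqP/val_inj => /=.
by rewrite !iter_big //; have := ltn_ord w; lia.
Qed.

Lemma anc_refl v : anc f v v.
Proof. by apply/ancP; exists 0. Qed.

Lemma anc_trans u v w : anc f u v -> anc f v w -> anc f u w.
Proof.
move=> /ancP [i <-] /ancP [j <-]; apply/ancP; exists (i + j).
by rewrite iterD.
Qed.

Lemma anc_le v w : anc f v w -> nat_of_ord v <= w.
Proof.
move=> /ancP [j <-]; have := iter_le j w; lia.
Qed.

Lemma anc_antisym v w : anc f v w -> anc f w v -> v = w.
Proof.
by move=> h1 h2; apply/val_inj/eqP; rewrite eqn_leq !anc_le.
Qed.

Lemma anc_comp u v w : anc f u w -> anc f v w -> anc f u v || anc f v u.
Proof.
move=> /ancP [i <-] /ancP [j <-]; case: (leqP i j) => ij.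
  apply/orP; right; apply/ancP; exists (j - i).
  by rewrite -iterD subnK.
apply/orP; left; apply/ancP; exists (i - j).
by rewrite -iterD subnK // ltnW.
Qed.

Lemma anc_root (r w : 'I_n) : nat_of_ord r = 0 -> anc f r w.
Proof.
move=> r0; apply/ancP; exists w; apply/val_inj; rewrite /= r0.
exact: iter_big.
Qed.

Lemma anc_to_root (r v : 'I_n) : nat_of_ord r = 0 -> anc f v r -> v = r.
Proof.
move=> r0 /anc_le; rewrite r0 leqn0 => /eqP v0; by apply/val_inj; rewrite /= v0 r0.
Qed.

Lemma anc_par v x : anc f v x -> x != v -> anc f v (f x).
Proof.
move=> /ancP [[/= ->|j]]; first by rewrite eqxx.
by rewrite iterSr => h _; apply/ancP; exists j.
Qed.


Definition ischild (v c : 'I_n) := (nat_of_ord v < c) && (f c == v).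

Lemma anc_child v c : ischild v c -> anc f v c.
Proof. by case/andP=> _ /eqP <-; apply/ancP; exists 1. Qed.

Lemma child_uniq v w c c' : ischild v c -> ischild v c' ->
  anc f c w -> anc f c' w -> c = c'.
Proof.
move=> hc hc' a1 a2; apply/eqP/negPn/negP => ne.
have key : forall x y, ischild v x -> ischild v y -> x != y -> anc f x y -> False.
  move=> x y hx hy nxy axy.
  have : anc f x (f y) by apply: anc_par; rewrite // eq_sym.
  case/andP: hy => _ /eqP ->; move/anc_le; case/andP: hx => vx _; lia.
case/orP: (anc_comp a1 a2) => a.
  exact: (key c c').
by apply: (key c' c) => //; rewrite eq_sym.
Qed.

Lemma child_sum v w :
  \sum_(c | ischild v c) anc f c w = ((w != v) && anc f v w).
Proof.
case: (boolP ((w != v) && anc f v w)) => [/andP [wv avw]|H].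
  pose P j := iter j f w == v.
  have exP : exists j, P j by case/ancP: avw => j hj; exists j; apply/eqP.
  case: (ex_minnP exP) => j /eqP Pj minj.
  have j0 : j != 0 by apply: contraNneq wv => j0; rewrite -Pj j0.
  set c := iter j.-1 f w.
  have fc : f c = v by rewrite -Pj /c -iterS prednK // lt0n.
  have cv : c != v.
    apply/negP => /eqP cv; have := minj j.-1; rewrite /P -/c cv eqxx => /(_ isT).
    by case: j j0 {Pj minj c fc cv} => //= j _; rewrite ltnn.
  have chc : ischild v c.
    rewrite /ischild fc eqxx andbT.
    case: (eqVneq (nat_of_ord c) 0) => c0.
      by move: cv; rewrite -{1}fc rt0 // eqxx.
    by have := rtlt c0; rewrite fc.
  have acw : anc f c w by apply/ancP; exists j.-1.
  rewrite (bigD1 c) //= acw big1 // => c' /andP [hc' nc'].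
  case: (boolP (anc f c' w)) => // ac'w; exfalso.
  by move/eqP: nc'; apply; exact: (child_uniq hc' chc ac'w acw).
apply: big1 => c hc; case: (boolP (anc f c w)) => // acw; exfalso.
move/negP: H; apply.
have avc := anc_child hc.
rewrite (anc_trans avc acw) andbT; apply/negP => /eqP wv.
move: acw; rewrite wv => /anc_le; case/andP: hc; lia.
Qed.

Lemma sz_children_sum v :
  sz f v = 1 + \sum_(c | ischild v c) sz f c.
Proof.
rewrite /sz exchange_big /=.
under [X in _ = 1 + X]eq_bigr => w _ do rewrite child_sum.
rewrite (bigD1 v) //= anc_refl (bigD1 v (isT : true)) /= eqxx /=; congr (_ + _).
by apply: eq_bigr => w wv; rewrite wv.
Qed.

Lemma sz_ge1 v : 1 <= sz f v.
Proof. by rewrite sz_children_sum. Qed.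

Lemma sz_le v : sz f v <= n.
Proof.
rewrite /sz; apply: (@leq_trans (\sum_(w : 'I_n) 1)).
  by apply: leq_sum => i _; apply: leq_b1.
by rewrite sum1_card card_ord.
Qed.

Lemma children_sum (g : 'I_n -> nat) (v : 'I_n) :
  \sum_(c <- children f v) g c = \sum_(c | ischild v c) g c.
Proof. by rewrite /children big_filter big_enum_cond. Qed.

Lemma size_shape_aux k (v : 'I_n) : n <= k + v -> tree_size (shape_aux f k v) = sz f v.
Proof.
elim: k v => [|k IH] v; first by rewrite add0n; have := ltn_ord v; lia.
move=> hk /=; rewrite sz_children_sum add1n; congr S.
rewrite sumn_mapE big_map children_sum; apply: eq_bigr => c /andP [vc _].
apply: IH; lia.
Qed.

Lemma size_fringe (v : 'I_n) : tree_size (fringe_shape f v) = sz f v.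
Proof. by apply: size_shape_aux; rewrite leq_addr. Qed.

End Anc.

Section Ext.
Variable m : nat.

Definition ext (f : {ffun 'I_m -> 'I_m}) (p : 'I_m) : {ffun 'I_m.+1 -> 'I_m.+1} :=
  [ffun i => if unlift ord_max i is Some j then lift ord_max (f j) else lift ord_max p].

Variable f : {ffun 'I_m -> 'I_m}.
Variable p : 'I_m.

Lemma ext_lift j : ext f p (lift ord_max j) = lift ord_max (f j).
Proof. by rewrite ffunE liftK. Qed.

Lemma ext_max : ext f p ord_max = lift ord_max p.
Proof. by rewrite ffunE unlift_none. Qed.

Lemma iter_ext_lift j w : iter j (ext f p) (lift ord_max w) = lift ord_max (iter j f w).
Proof. by elim: j => [|j IH] //=; rewrite IH ext_lift. Qed.

Lemma iter_ext_max j : iter j.+1 (ext f p) ord_max = lift ord_max (iter j f p).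
Proof. by rewrite iterSr ext_max iter_ext_lift. Qed.

Lemma lift_maxE (j : 'I_m) : lift ord_max j = widen_ord (leqnSn m) j.
Proof. apply: val_inj; exact: lift_max. Qed.

Lemma sum_split (F : 'I_m.+1 -> nat) :
  \sum_(i : 'I_m.+1) F i = \sum_(j : 'I_m) F (lift ord_max j) + F ord_max.
Proof.
rewrite big_ord_recr /=; congr (_ + _); apply: eq_bigr => j _.
by rewrite lift_maxE.
Qed.

Hypothesis Hf : is_rectree f.

Lemma ext_rect : is_rectree (ext f p).
Proof.
apply/andP; split => //; apply/forallP => i.
case: (unliftP ord_max i) => [j ->|->].
  rewrite ext_lift !(lift_max (j : 'I_m)) (lift_max (f j)).
  case: (eqVneq (nat_of_ord j) 0) => j0.
    by rewrite rt0 // eqxx.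
  by apply: rtlt.
rewrite ext_max (lift_max p).
have pm := ltn_ord p.
have -> : (nat_of_ord (@ord_max m) == 0) = false by apply/negbTE; rewrite /=; lia.
by [].
Qed.

Lemma ne_lift_max j : lift ord_max j != ord_max :> 'I_m.+1.
Proof. by apply/eqP => /(congr1 (@nat_of_ord _)); rewrite (lift_max j) => jm; have := ltn_ord j; rewrite jm /=; lia. Qed.

Lemma anc_ext_ll v w : anc (ext f p) (lift ord_max v) (lift ord_max w) = anc f v w.
Proof.
apply/(sameP (ancP ext_rect _ _))/(iffP (ancP Hf _ _)) => [[j <-]|[j]].
  by exists j; rewrite iter_ext_lift.
by rewrite iter_ext_lift => /lift_inj <-; exists j.
Qed.

Lemma anc_ext_lm v : anc (ext f p) (lift ord_max v) ord_max = anc f v p.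
Proof.
apply/(sameP (ancP ext_rect _ _))/(iffP (ancP Hf _ _)) => [[j <-]|[[|j]]].
  by exists j.+1; rewrite iter_ext_max.
  by move=> /= /esym/eqP; rewrite (negbTE (ne_lift_max v)).
by rewrite iter_ext_max => /lift_inj <-; exists j.
Qed.

Lemma anc_ext_ml w : anc (ext f p) ord_max (lift ord_max w) = false.
Proof.
apply/negbTE/negP => /(ancP ext_rect) [j]; rewrite iter_ext_lift.
by move/eqP; rewrite (negbTE (ne_lift_max _)).
Qed.

Lemma anc_ext_mm : anc (ext f p) ord_max ord_max.
Proof. exact: (anc_refl ext_rect). Qed.

Lemma sz_ext_lift v : sz (ext f p) (lift ord_max v) = sz f v + anc f v p.
Proof.
by rewrite /sz sum_split anc_ext_lm; congr (_ + _); apply: eq_bigr => w _; rewrite anc_ext_ll.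
Qed.

Lemma sz_ext_max : sz (ext f p) ord_max = 1.
Proof.
by rewrite /sz sum_split anc_ext_mm big1 // => w _; rewrite anc_ext_ml.
Qed.

End Ext.

Lemma ext_inj m : injective (fun x : {ffun 'I_m -> 'I_m} * 'I_m => ext x.1 x.2).
Proof.
move=> [f p] [f' p'] /= E.
have Ef : f = f'.
  apply/ffunP => j; apply: (@lift_inj _ ord_max).
  by rewrite -!(ext_lift f p) -(ext_lift f' p') E.
subst f'; congr pair; apply: (@lift_inj _ ord_max).
by rewrite -(ext_max f p) -(ext_max f p') E.
Qed.

Lemma sum_rect_ext m (F : {ffun 'I_m.+2 -> 'I_m.+2} -> nat) :
  \sum_(g | is_rectree g) F g =
  \sum_(f : {ffun 'I_m.+1 -> 'I_m.+1} | is_rectree f) \sum_(p : 'I_m.+1) F (ext f p).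
Proof.
rewrite pair_big_dep /=.
have inj : {in [pred x : {ffun 'I_m.+1 -> 'I_m.+1} * 'I_m.+1 | is_rectree x.1] &,
   injective (fun x => ext x.1 x.2)} by move=> x y _ _; apply: ext_inj.
rewrite (eq_bigl (fun x => x \in [pred x : {ffun 'I_m.+1 -> 'I_m.+1} * 'I_m.+1 | is_rectree x.1]));
  last by move=> x; rewrite inE andbT.
rewrite -(big_imset _ inj); apply: eq_bigl => g.
apply/idP/imsetP => [Hg|[[f p] /= Hf ->]]; last exact: ext_rect.
pose f := [ffun j : 'I_m.+1 => inord (g (lift ord_max j)) : 'I_m.+1].
pose p := (inord (g ord_max) : 'I_m.+1).
have le1 : forall j : 'I_m.+1, nat_of_ord (g (lift ord_max j)) <= m.
  move=> j; have := rtle Hg (lift ord_max j); rewrite lift_max; have := ltn_ord j; lia.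
have le2 : nat_of_ord (g ord_max) <= m by have := rtle Hg ord_max; rewrite /=; lia.
have Hf : is_rectree f.
  apply/andP; split => //; apply/forallP => j; rewrite ffunE.
  case: (eqVneq (nat_of_ord j) 0) => j0.
    apply/eqP; apply: ord_inj; rewrite inordK; last by rewrite ltnS le1.
    by rewrite (rt0 Hg) (lift_max j).
  rewrite inordK; last by rewrite ltnS le1.
  by have := rtlt Hg (i := lift ord_max j); rewrite (lift_max j) => /(_ j0).
exists (f, p); first by [].
apply/ffunP => i; rewrite /=.
case: (unliftP ord_max i) => [j ->|->].
  by rewrite ext_lift ffunE; apply: ord_inj; rewrite (lift_max (inord _ : 'I_m.+1)) inordK // ltnS le1.
by rewrite ext_max; apply: ord_inj; rewrite (lift_max (inord _ : 'I_m.+1)) inordK // ltnS le2.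
Qed.

Definition X n (f : {ffun 'I_n -> 'I_n}) k := \sum_(v : 'I_n) (sz f v == k).
Definition inc n (f : {ffun 'I_n -> 'I_n}) v w := ~~ anc f v w && ~~ anc f w v.
Definition Wp n (f : {ffun 'I_n -> 'I_n}) a b :=
  \sum_(v : 'I_n) \sum_(w : 'I_n) ((sz f v == a) * (sz f w == b) * inc f v w).

Lemma sum_not m (P : 'I_m -> bool) : \sum_(p : 'I_m) (~~ P p) = m - \sum_(p : 'I_m) P p.
Proof.
have : \sum_(p : 'I_m) (~~ P p) + \sum_(p : 'I_m) P p = m.
  by rewrite -big_split /=; under eq_bigr => p _ do rewrite addn_negb; rewrite sum1_card card_ord.
lia.
Qed.

Lemma eq_add1 s a : 1 <= a -> (s + 1 == a) = (s == a - 1).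
Proof. move=> a1; apply/eqP/eqP; lia. Qed.

Lemma eq_S1 s a : 1 <= a -> (s.+1 == a) = (s == a - 1).
Proof. move=> a1; apply/eqP/eqP; lia. Qed.

Section Rec.
Variable m : nat.
Variable f : {ffun 'I_m -> 'I_m}.
Hypothesis Hf : is_rectree f.

Lemma X_ext p k : X (ext f p) k = \sum_(v : 'I_m) (sz f v + anc f v p == k) + (1 == k).
Proof.
rewrite /X sum_split (sz_ext_max p Hf); congr (_ + _); apply: eq_bigr => v _.
by rewrite (sz_ext_lift p Hf).
Qed.

Lemma X_ext_sum k : 1 <= k ->
  \sum_(p : 'I_m) X (ext f p) k = (m - k) * X f k + (k - 1) * X f (k - 1) + m * (k == 1).
Proof.
move=> k1.
under eq_bigr => p _ do rewrite X_ext.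
rewrite big_split /= sum_nat_const card_ord eq_sym; congr (_ + _).
rewrite exchange_big /= /X big_distrr big_distrr /= -big_split /=.
apply: eq_bigr => v _.
have E : forall p, nat_of_bool (sz f v + anc f v p == k) = (sz f v == k) * (~~ anc f v p) + (sz f v == k - 1) * anc f v p.
  move=> p; case: (anc f v p); rewrite /= ?addn0 ?muln0 ?muln1 ?addn0 ?add0n //.
  by rewrite (eq_add1 _ k1).
under eq_bigr => p _ do rewrite E.
rewrite big_split /= -!big_distrr /= sum_not -/(sz f v).
by case: eqP => h1; case: eqP => h2 /=; lia.
Qed.


Lemma inc_ext_ll p v w : inc (ext f p) (lift ord_max v) (lift ord_max w) = inc f v w.
Proof. by rewrite /inc !(anc_ext_ll p Hf). Qed.
Lemma inc_ext_lm p v : inc (ext f p) (lift ord_max v) ord_max = ~~ anc f v p.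
Proof. by rewrite /inc (anc_ext_lm p Hf) (anc_ext_ml p Hf) andbT. Qed.
Lemma inc_ext_ml p w : inc (ext f p) ord_max (lift ord_max w) = ~~ anc f w p.
Proof. by rewrite /inc (anc_ext_lm p Hf) (anc_ext_ml p Hf). Qed.
Lemma inc_ext_mm p : inc (ext f p) ord_max ord_max = false.
Proof. by rewrite /inc (anc_ext_mm p Hf). Qed.

Lemma Wp_ext p a b : Wp (ext f p) a b =
  \sum_(v : 'I_m) \sum_(w : 'I_m)
     ((sz f v + anc f v p == a) * (sz f w + anc f w p == b) * inc f v w)
  + \sum_(v : 'I_m) ((sz f v + anc f v p == a) * (1 == b) * ~~ anc f v p)
  + \sum_(w : 'I_m) ((1 == a) * (sz f w + anc f w p == b) * ~~ anc f w p).
Proof.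
rewrite /Wp sum_split.
under eq_bigr => v _ do rewrite sum_split.
rewrite sum_split big_split /=.
rewrite (sz_ext_max p Hf) inc_ext_mm muln0 addn0.
congr (_ + _ + _).
- by apply: eq_bigr => v _; apply: eq_bigr => w _; rewrite !(sz_ext_lift p Hf) inc_ext_ll.
- by apply: eq_bigr => v _; rewrite (sz_ext_lift p Hf) inc_ext_lm.
- by apply: eq_bigr => w _; rewrite (sz_ext_lift p Hf) inc_ext_ml.
Qed.

Lemma not_both v w p : inc f v w -> ~~ (anc f v p && anc f w p).
Proof.
move=> /andP [h1 h2]; apply/negP => /andP [a1 a2].
by case/orP: (anc_comp Hf a1 a2) => h; [move/negP: h1 | move/negP: h2].
Qed.

Lemma pair_p v w a b : 1 <= a -> 1 <= b -> inc f v w ->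
  \sum_(p : 'I_m) ((sz f v + anc f v p == a) * (sz f w + anc f w p == b)) =
  (sz f v == a) * (sz f w == b) * (m - sz f v - sz f w)
  + (sz f v == a - 1) * (sz f w == b) * sz f v
  + (sz f v == a) * (sz f w == b - 1) * sz f w.
Proof.
move=> a1 b1 hinc.
have E : forall p, (sz f v + anc f v p == a) * (sz f w + anc f w p == b) =
  (sz f v == a) * (sz f w == b) * (~~ anc f v p && ~~ anc f w p)
  + (sz f v == a - 1) * (sz f w == b) * anc f v p
  + (sz f v == a) * (sz f w == b - 1) * anc f w p.
  move=> p; have := not_both p hinc.
  case: (anc f v p); case: (anc f w p) => //= _;
  rewrite ?addn0 ?addn1 ?(eq_S1 _ a1) ?(eq_S1 _ b1) ?muln0 ?muln1 ?addn0 ?add0n //.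
under eq_bigr => p _ do rewrite E.
rewrite !big_split /= -!big_distrr /= -/(sz f v) -/(sz f w).
have S : \sum_(p : 'I_m) (~~ anc f v p && ~~ anc f w p) + sz f v + sz f w = m.
  rewrite /sz -!big_split /=; transitivity (\sum_(p : 'I_m) 1); last by rewrite sum1_card card_ord.
  apply: eq_bigr => p _.
  by have := not_both p hinc; case: (anc f v p); case: (anc f w p).
have -> : \sum_(p : 'I_m) (~~ anc f v p && ~~ anc f w p) = m - sz f v - sz f w by lia.
by [].
Qed.

Lemma Wp_ext_sum a b : 1 <= a -> 1 <= b ->
  \sum_(p : 'I_m) Wp (ext f p) a b =
  (a - 1) * Wp f (a - 1) b + (b - 1) * Wp f a (b - 1) + (m - a - b) * Wp f a b
  + (a == 1) * ((m - b) * X f b) + (b == 1) * ((m - a) * X f a).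
Proof.
move=> a1 b1.
under eq_bigr => p _ do rewrite Wp_ext.
rewrite !big_split /=.
have H1 : \sum_(p : 'I_m) \sum_(v : 'I_m) \sum_(w : 'I_m)
     ((sz f v + anc f v p == a) * (sz f w + anc f w p == b) * inc f v w) =
  (a - 1) * Wp f (a - 1) b + (b - 1) * Wp f a (b - 1) + (m - a - b) * Wp f a b.
  rewrite exchange_big /=.
  under eq_bigr => v _ do rewrite exchange_big /=.
  rewrite /Wp !big_distrr -!big_split /=; apply: eq_bigr => v _.
  rewrite !big_distrr -!big_split /=; apply: eq_bigr => w _.
  rewrite -big_distrl /=.
  case: (boolP (inc f v w)) => hi; last by rewrite /= !muln0.
  rewrite (pair_p a1 b1 hi) /= !muln1.
  have := sz_ge1 Hf v; have := sz_ge1 Hf w.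
  move=> g1 g2.
  case: (sz f v =P a) => h1; case: (sz f w =P b) => h2; case: (sz f v =P a - 1) => h3;
   case: (sz f w =P b - 1) => h4 /=; lia.
have H2 : \sum_(p : 'I_m) \sum_(v : 'I_m) ((sz f v + anc f v p == a) * (1 == b) * ~~ anc f v p)
   = (b == 1) * ((m - a) * X f a).
  rewrite exchange_big /= /X !big_distrr /=; apply: eq_bigr => v _.
  have E : forall p, (sz f v + anc f v p == a) * (1 == b) * ~~ anc f v p =
     ((b == 1) * (sz f v == a)) * ~~ anc f v p.
    move=> p; rewrite (eq_sym 1 b); case: (anc f v p); rewrite /= ?muln0 ?muln1 ?addn0 //; apply: mulnC.
  under eq_bigr => p _ do rewrite E.
  rewrite -big_distrr /= sum_not -/(sz f v).
  by case: eqP => h1; case: eqP => h2 /=; lia.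
have H3 : \sum_(p : 'I_m) \sum_(w : 'I_m) ((1 == a) * (sz f w + anc f w p == b) * ~~ anc f w p)
   = (a == 1) * ((m - b) * X f b).
  rewrite exchange_big /= /X !big_distrr /=; apply: eq_bigr => w _.
  have E : forall p, (1 == a) * (sz f w + anc f w p == b) * ~~ anc f w p =
     ((a == 1) * (sz f w == b)) * ~~ anc f w p.
    move=> p; rewrite (eq_sym 1 a); case: (anc f w p); rewrite /= ?muln0 ?muln1 ?addn0 //.
  under eq_bigr => p _ do rewrite E.
  rewrite -big_distrr /= sum_not -/(sz f w).
  by case: eqP => h1; case: eqP => h2 /=; lia.
rewrite H1 H2 H3; lia.
Qed.

End Rec.

Definition Rn n := \sum_(f : {ffun 'I_n -> 'I_n} | is_rectree f) 1.
Definition An n k := \sum_(f : {ffun 'I_n -> 'I_n} | is_rectree f) X f k.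
Definition Bn n a b := \sum_(f : {ffun 'I_n -> 'I_n} | is_rectree f) Wp f a b.

Lemma inc_sz_lt n (f : {ffun 'I_n -> 'I_n}) (Hf : is_rectree f) v w :
  inc f v w -> sz f v + sz f w < n.
Proof.
move=> hi.
have r0 : 0 < n := rt_pos Hf.
pose r := Ordinal r0.
rewrite /sz -big_split /= (bigD1 r) //=.
have -> : anc f v r + anc f w r = 0.
  case/andP: hi => h1 h2.
  case: (boolP (anc f v r)) => hv.
    by move: h1; rewrite (anc_to_root Hf (erefl _ : nat_of_ord r = 0) hv) anc_root.
  case: (boolP (anc f w r)) => hw //.
  by move: h2; rewrite (anc_to_root Hf (erefl _ : nat_of_ord r = 0) hw) anc_root.
rewrite add0n.
apply: (@leq_ltn_trans (\sum_(i < n | i != r) 1)).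
  apply: leq_sum => x _; have := not_both Hf x hi.
  by case: (anc f v x); case: (anc f w x).
rewrite sum1_card cardC1 card_ord; lia.
Qed.

Lemma Wp_zero n (f : {ffun 'I_n -> 'I_n}) (Hf : is_rectree f) a b :
  n <= a + b -> Wp f a b = 0.
Proof.
move=> h; apply: big1 => v _; apply: big1 => w _.
case: (boolP (inc f v w)) => hi; last by rewrite muln0.
have := inc_sz_lt Hf hi.
by case: eqP => h1; case: eqP => h2 //=; lia.
Qed.

Lemma X_big n (f : {ffun 'I_n -> 'I_n}) (Hf : is_rectree f) k : n < k -> X f k = 0.
Proof.
move=> h; apply: big1 => v _; have := sz_le f v.
by case: eqP => //; lia.
Qed.

Lemma R_rec m : Rn m.+2 = m.+1 * Rn m.+1.
Proof.
rewrite /Rn (sum_rect_ext (fun _ => 1)) big_distrr /=.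
by apply: eq_bigr => f _; rewrite sum1_card card_ord muln1.
Qed.

Lemma A_rec m k : 1 <= k ->
  An m.+2 k = (m.+1 - k) * An m.+1 k + (k - 1) * An m.+1 (k - 1) + m.+1 * (k == 1) * Rn m.+1.
Proof.
move=> k1; rewrite /An (sum_rect_ext (fun g => X g k)).
rewrite /Rn !big_distrr -!big_split /=; apply: eq_bigr => f Hf.
by rewrite (X_ext_sum Hf k1) muln1.
Qed.

Lemma B_rec m a b : 1 <= a -> 1 <= b ->
  Bn m.+2 a b = (a - 1) * Bn m.+1 (a - 1) b + (b - 1) * Bn m.+1 a (b - 1)
    + (m.+1 - a - b) * Bn m.+1 a b
    + (a == 1) * (m.+1 - b) * An m.+1 b + (b == 1) * (m.+1 - a) * An m.+1 a.
Proof.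
move=> a1 b1; rewrite /An /Bn (sum_rect_ext (fun g => Wp g a b)).
rewrite !big_distrr -!big_split /=; apply: eq_bigr => f Hf.
by rewrite (Wp_ext_sum Hf a1 b1) !mulnA.
Qed.

Lemma B_zero n a b : n <= a + b -> Bn n a b = 0.
Proof. by move=> h; apply: big1 => f Hf; apply: Wp_zero. Qed.

Lemma A_formula n : 0 < n -> forall k, 1 <= k -> k < n -> An n k * (k * k.+1) = n * Rn n.
Proof.
case: n => // m _; elim: m => [|m IH] k k1 kn; first by lia.
rewrite (A_rec m k1) R_rec.
case: (eqVneq k 1) => [->|k2] /=.
  rewrite subn1 /= muln1 subnn mul0n addn0.
  case: m IH {kn} => [|m] IH; first by nia.
  have := IH 1 isT isT; nia.
rewrite muln0 mul0n addn0.
have kk : 1 <= k - 1 by lia.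
have e1 := IH (k - 1) kk ltac:(lia).
have e1' : (k - 1) * An m.+1 (k - 1) * (k * k.+1) = k.+1 * (m.+1 * Rn m.+1).
  rewrite -e1; have -> : (k - 1).+1 = k by lia.
  nia.
case: (ltnP k m.+1) => km.
  have e2 := IH k k1 km.
  rewrite mulnDl e1' -mulnA e2.
  have -> : m.+2 = (m.+1 - k) + k.+1 by lia.
  by rewrite mulnDl.
have -> : m.+1 - k = 0 by lia.
rewrite mul0n add0n e1'.
by have -> : k = m.+1 by lia.
Qed.

Lemma ar1 m : (m.+1 - 1 - 1) * m.+1 + 2 * (m.+1 - 1) + 2 * (m.+1 - 1) <= m.+2 * m.+2.
Proof. case: m => [|m] //; rewrite !subn1 /=; nia. Qed.
Lemma ar2 b d : (b.+1 + d) * (b + d).+1 + 2 * d.+1 <= (b + d).+2 * (b + d).+2.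
Proof. nia. Qed.
Lemma ar3 m : m.+3 * m.+1 <= m.+2 * m.+2.
Proof. nia. Qed.

Lemma B_bound n : 0 < n -> forall a b, 1 <= a -> 1 <= b ->
  Bn n a b * (a * a.+1 * (b * b.+1)) <= n * n * Rn n.
Proof.
case: n => // m _; elim: m => [|m IH] a b a1 b1.
  by rewrite B_zero ?mul0n //; lia.
case: (leqP (m.+2) (a + b)) => hab; first by rewrite B_zero ?mul0n.
rewrite (B_rec m a1 b1) R_rec.
have h0 := IH a b a1 b1.
have h1 : 2 <= a -> (a - 1) * Bn m.+1 (a - 1) b * (a * a.+1 * (b * b.+1))
     <= a.+1 * (m.+1 * m.+1 * Rn m.+1).
  move=> a2; have := IH (a - 1) b ltac:(lia) b1.
  have -> : (a - 1).+1 = a by lia.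
  move=> h; apply: (@leq_trans (a.+1 * (Bn m.+1 (a - 1) b * ((a - 1) * a * (b * b.+1))))).
    by apply: eq_leq; nia.
  by rewrite leq_mul2l h orbT.
have h2 : 2 <= b -> (b - 1) * Bn m.+1 a (b - 1) * (a * a.+1 * (b * b.+1))
     <= b.+1 * (m.+1 * m.+1 * Rn m.+1).
  move=> b2; have := IH a (b - 1) a1 ltac:(lia).
  have -> : (b - 1).+1 = b by lia.
  move=> h; apply: (@leq_trans (b.+1 * (Bn m.+1 a (b - 1) * (a * a.+1 * ((b - 1) * b))))).
    by apply: eq_leq; nia.
  by rewrite leq_mul2l h orbT.
have h3 : (m.+1 - a - b) * Bn m.+1 a b * (a * a.+1 * (b * b.+1))
     <= (m.+1 - a - b) * (m.+1 * m.+1 * Rn m.+1).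
  by rewrite -mulnA leq_mul2l h0 orbT.
have h4 : a = 1 -> (m.+1 - b) * An m.+1 b * (a * a.+1 * (b * b.+1)) = 2 * (m.+1 - b) * (m.+1 * Rn m.+1).
  move=> ea; have := A_formula (ltn0Sn m) b1 ltac:(lia).
  rewrite ea => h; rewrite -h; nia.
have h5 : b = 1 -> (m.+1 - a) * An m.+1 a * (a * a.+1 * (b * b.+1)) = 2 * (m.+1 - a) * (m.+1 * Rn m.+1).
  move=> eb; have := A_formula (ltn0Sn m) a1 ltac:(lia).
  rewrite eb => h; rewrite -h; nia.
move: h0 h1 h2 h3 h4 h5.
generalize (Bn m.+1 (a - 1) b) (Bn m.+1 a (b - 1)) (Bn m.+1 a b) (An m.+1 a) (An m.+1 b) (Rn m.+1).
move=> B1 B2 B0 Aa Ab r h0 h1 h2 h3 h4 h5.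
rewrite !mulnDl.
have EM : m.+1 * m.+1 * r = m.+1 * (m.+1 * r) by rewrite mulnA.
rewrite EM in h0 h1 h2 h3.
move: (m.+1 * r) => K in h0 h1 h2 h3 h4 h5 *.
set D := a * a.+1 * (b * b.+1) in h0 h1 h2 h3 h4 h5 *.
case: (eqVneq a 1) => [ea|na]; case: (eqVneq b 1) => [eb|nb].
- have := h4 ea; have := h5 eb; subst a b => /= e5 e4.
  rewrite !subnn !mul0n !add0n /= !mul1n e4 e5.
  apply: (@leq_trans ((m.+1 - 1 - 1) * (m.+1 * K) + 2 * (m.+1 - 1) * K + 2 * (m.+1 - 1) * K)).
    by rewrite !leq_add2r.
  have -> : (m.+1 - 1 - 1) * (m.+1 * K) = ((m.+1 - 1 - 1) * m.+1) * K by rewrite mulnA.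
  rewrite -!mulnDl leq_mul2r; apply/orP; right.
  exact: ar1.
- have e4 := h4 ea; have h2' := h2 ltac:(lia); subst a.
  rewrite /= !mul1n !mul0n !add0n !addn0 e4.
  apply: (@leq_trans (b.+1 * (m.+1 * K) + (m.+1 - 1 - b) * (m.+1 * K) + 2 * (m.+1 - b) * K)).
    by rewrite leq_add2r leq_add.
  have -> : b.+1 * (m.+1 * K) + (m.+1 - 1 - b) * (m.+1 * K) + 2 * (m.+1 - b) * K =
     ((b.+1 + (m.+1 - 1 - b)) * m.+1 + 2 * (m.+1 - b)) * K by rewrite !mulnDl !mulnA.
  rewrite leq_mul2r; apply/orP; right.
  have [d ->] : exists d, m = b + d by exists (m - b); lia.
  have -> : (b + d).+1 - 1 - b = d by lia.
  have -> : (b + d).+1 - b = d.+1 by lia.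
  exact: ar2.
- have e5 := h5 eb; have h1' := h1 ltac:(lia); subst b.
  rewrite /= !mul1n !mul0n !addn0 e5.
  apply: (@leq_trans (a.+1 * (m.+1 * K) + (m.+1 - a - 1) * (m.+1 * K) + 2 * (m.+1 - a) * K)).
    by rewrite leq_add2r leq_add.
  have -> : a.+1 * (m.+1 * K) + (m.+1 - a - 1) * (m.+1 * K) + 2 * (m.+1 - a) * K =
     ((a.+1 + (m.+1 - a - 1)) * m.+1 + 2 * (m.+1 - a)) * K by rewrite !mulnDl !mulnA.
  rewrite leq_mul2r; apply/orP; right.
  have [d ->] : exists d, m = a + d by exists (m - a); lia.
  have -> : (a + d).+1 - a - 1 = d by lia.
  have -> : (a + d).+1 - a = d.+1 by lia.
  exact: ar2.
- have h1' := h1 ltac:(lia); have h2' := h2 ltac:(lia).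
  rewrite /= !mul0n !addn0.
  apply: (@leq_trans (a.+1 * (m.+1 * K) + b.+1 * (m.+1 * K) + (m.+1 - a - b) * (m.+1 * K))).
    by rewrite !leq_add.
  have -> : a.+1 * (m.+1 * K) + b.+1 * (m.+1 * K) + (m.+1 - a - b) * (m.+1 * K) =
     ((a.+1 + b.+1 + (m.+1 - a - b)) * m.+1) * K by rewrite !mulnDl !mulnA.
  rewrite leq_mul2r; apply/orP; right.
  have -> : a.+1 + b.+1 + (m.+1 - a - b) = m.+3 by lia.
  exact: ar3.
Qed.


Lemma sz_lt n (f : {ffun 'I_n -> 'I_n}) (Hf : is_rectree f) v w :
  anc f v w -> v != w -> sz f w < sz f v.
Proof.
move=> avw vw.
have E : sz f v = sz f w + \sum_(x : 'I_n) (anc f v x && ~~ anc f w x).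
  rewrite /sz -big_split /=; apply: eq_bigr => x _.
  case: (boolP (anc f w x)) => h /=; last by rewrite add0n andbT.
  by rewrite (anc_trans Hf avw h).
rewrite E -addn1 leq_add2l (bigD1 v) //= anc_refl //=.
case: (boolP (anc f w v)) => awv //.
by move: vw; rewrite (anc_antisym Hf avw awv) eqxx.
Qed.

Lemma WX n (f : {ffun 'I_n -> 'I_n}) (Hf : is_rectree f) k :
  Wp f k k + X f k = X f k * X f k.
Proof.
rewrite /Wp /X big_distrl /=.
have E : forall v, \sum_(w : 'I_n) ((sz f v == k) * (sz f w == k) * inc f v w) + (sz f v == k)
   = (sz f v == k) * \sum_(w : 'I_n) (sz f w == k).
  move=> v; rewrite big_distrr /= (bigD1 v) //= [in RHS](bigD1 v) //=.
  rewrite /inc anc_refl // muln0 add0n addnC; congr (_ + _).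
    by case: (sz f v == k).
  apply: eq_bigr => w wv.
  case: (boolP (sz f v == k)) => // /eqP hv; case: (boolP (sz f w == k)) => // /eqP hw /=.
  rewrite !mul1n.
  case: (boolP (anc f v w)) => h1.
    by move: (sz_lt Hf h1 (negbT (introF eqP (fun e => (negP wv) (introT eqP (esym e)))))); lia.
  case: (boolP (anc f w v)) => h2 //.
  by move: (sz_lt Hf h2 wv); lia.
rewrite -big_split /=; apply: eq_bigr => v _; exact: E.
Qed.

Lemma per_fk n (f : {ffun 'I_n -> 'I_n}) (Hf : is_rectree f) k :
  2 * X f k <= 2 * (0 < X f k) + Wp f k k.
Proof.
have := WX Hf k; move: (Wp f k k) (X f k) => W x.
case: x => [|x] /=; nia.
Qed.

Lemma main_count n (I : seq nat) :
  0 < n ->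
  (forall k, k \in I -> [/\ 1 <= k, k < n, n <= k * k.+1 & k * k.+1 <= 2 * n]) ->
  size I * Rn n <= 4 * \sum_(f : {ffun 'I_n -> 'I_n} | is_rectree f) \sum_(k <- I) (0 < X f k).
Proof.
move=> n0 HI.
set C := \sum_(f | _) _.
have H1a : 2 * \sum_(k <- I) An n k =
    \sum_(f : {ffun 'I_n -> 'I_n} | is_rectree f) \sum_(k <- I) 2 * X f k.
  rewrite big_distrr /= /An exchange_big /=; apply: eq_bigr => k _.
  by rewrite big_distrr.
have H1b : \sum_(f : {ffun 'I_n -> 'I_n} | is_rectree f) \sum_(k <- I) (2 * (0 < X f k) + Wp f k k)
    = 2 * C + \sum_(k <- I) Bn n k k.
  rewrite /C /Bn big_distrr /= (exchange_big _ I) -big_split /=; apply: eq_bigr => f _.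
  by rewrite big_split big_distrr.
have H1 : 2 * \sum_(k <- I) An n k <= 2 * C + \sum_(k <- I) Bn n k k.
  rewrite H1a -H1b; apply: leq_sum => f Hf; apply: leq_sum => k _; exact: per_fk.
have H2 : \sum_(k <- I) Bn n k k <= \sum_(k <- I) An n k.
  rewrite big_seq_cond [X in _ <= X]big_seq_cond; apply: leq_sum => k /andP [kI _].
  case: (HI k kI) => k1 kn l1 l2.
  have eA := A_formula n0 k1 kn.
  have eB := B_bound n0 k1 k1.
  move: eA eB l1 l2; move: (k * k.+1) (An n k) (Bn n k k) (Rn n) => q a b r eA eB l1 l2.
  have : b * (q * q) <= a * (q * q).
    apply: (leq_trans eB); rewrite -mulnA -eA.
    apply: (@leq_trans (q * (a * q))); first by rewrite leq_mul2r l1 orbT.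
    by rewrite [q * _]mulnC -mulnA.
  rewrite leq_mul2r muln_eq0 orbb; case/orP => // /eqP q0; move: l1; rewrite q0; lia.
have H3 : size I * Rn n <= 2 * \sum_(k <- I) An n k.
  rewrite -sum1_size big_distrl /= [X in _ <= X]big_distrr /=.
  rewrite big_seq_cond [X in _ <= X]big_seq_cond.
  apply: leq_sum => k /andP [kI _]; rewrite mul1n.
  case: (HI k kI) => k1 kn l1 l2.
  have eA := A_formula n0 k1 kn.
  move: eA l1 l2; move: (k * k.+1) (An n k) (Rn n) => q a r eA l1 l2.
  have : n * r <= n * (2 * a).
    rewrite -eA; apply: (@leq_trans (a * (2 * n))); first by rewrite leq_mul2l l2 orbT.
    by rewrite mulnCA [n * _]mulnC -mulnA.
  by rewrite leq_mul2l; case/orP => // /eqP; lia.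
lia.
Qed.

Lemma X_pos_ex n (f : {ffun 'I_n -> 'I_n}) k : 0 < X f k -> exists v, sz f v == k.
Proof.
move=> h; case: (boolP [exists v, sz f v == k]) => [/existsP //|/existsPn H].
by move: h; rewrite /X big1 // => v _; rewrite (negbTE (H v)).
Qed.

Lemma sum_bool_count (T : Type) (s : seq T) (b : pred T) :
  \sum_(i <- s) (b i : nat) = count b s.
Proof. by elim: s => [|a s IH]; rewrite ?big_nil ?big_cons ?IH. Qed.

Definition tk n (f : {ffun 'I_n -> 'I_n}) k : tree :=
  if [pick v | sz f v == k] is Some v then canon (fringe_shape f v) else Node [::].

Lemma tk_spec n (f : {ffun 'I_n -> 'I_n}) (Hf : is_rectree f) k : 0 < X f k ->
  exists v, tk f k = canon (fringe_shape f v) /\ sz f v = k.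
Proof.
move=> /X_pos_ex [v0 hv0]; rewrite /tk.
case: pickP => [v /eqP hv|H]; first by exists v.
by move: (H v0); rewrite hv0.
Qed.

Lemma count_bound (e : nat -> seq tree) (He : enumerates_polya e) n
  (f : {ffun 'I_n -> 'I_n}) (Hf : is_rectree f) (I : seq nat) (P : pred tree) :
  uniq I -> (forall t, tree_size t \in I -> P t) -> (forall k, k \in I -> k <= n) ->
  \sum_(k <- I) (0 < X f k) <= count (fun t => P t && has_fringe f t) (e n).
Proof.
move=> uI HP Hn.
rewrite sum_bool_count -size_filter -(size_map (tk f)) -size_filter.
apply: uniq_leq_size.
  rewrite map_inj_in_uniq ?filter_uniq // => k1 k2.
  rewrite !mem_filter => /andP [h1 _] /andP [h2 _].
  case: (tk_spec Hf h1) => v1 [-> s1]; case: (tk_spec Hf h2) => v2 [-> s2] E.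
  by rewrite -s1 -s2 -(size_fringe Hf v1) -(size_fringe Hf v2) -(size_canon (fringe_shape f v1)) E size_canon.
move=> t /mapP [k]; rewrite mem_filter => /andP [hk kI] ->.
case: (tk_spec Hf hk) => v [-> sv].
have st : tree_size (canon (fringe_shape f v)) = k by rewrite size_canon size_fringe.
rewrite mem_filter; apply/andP; split; last first.
  case: (He n) => _ ->; rewrite /polya canon_idem eqxx /= st; exact: Hn.
rewrite HP ?st //=; apply/existsP; exists v.
by rewrite /same_shape canon_idem.
Qed.

Lemma star_rect n : 0 < n -> exists f : {ffun 'I_n -> 'I_n}, is_rectree f.
Proof.
case: n => // m _; exists [ffun i => ord0].
apply/andP; split => //; apply/forallP => i; rewrite ffunE.
case: (eqVneq (nat_of_ord i) 0) => [i0|i0] /=.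
  by apply/eqP/val_inj; rewrite /= i0.
by rewrite lt0n.
Qed.

Lemma Rn_pos n : 0 < n -> 0 < Rn n.
Proof.
move=> /star_rect [f Hf]; rewrite /Rn (bigD1 f) // add1n.
Qed.

Definition Ht n (t : tree) := \sum_(f : {ffun 'I_n -> 'I_n} | is_rectree f) (has_fringe f t : nat).

Lemma ratio t n : 0 < n ->
  Rminus R1 (Rdiv (coef_S t n) (coef_T n)) = Rdiv (INR (Ht n t)) (INR (Rn n)).
Proof.
move=> n0.
have E : Rn n = #|[set f : {ffun 'I_n -> 'I_n} | is_rectree f && ~~ has_fringe f t]| + Ht n t.
  rewrite -sum1dep_card /Rn (bigID (fun f => has_fringe f t)) /= addnC; congr (_ + _).
  by rewrite /Ht big_mkcondr /=; apply: eq_bigr => f _; case: (has_fringe f t).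
have E2 : #|[set f : {ffun 'I_n -> 'I_n} | is_rectree f]| = Rn n by rewrite -sum1dep_card.
rewrite /coef_S /coef_T E2.
have Rp : Rlt 0 (INR (Rn n)) by apply: lt_0_INR; apply/ltP; apply: Rn_pos.
have Fp : Rlt 0 (INR n`!) by apply: lt_0_INR; apply/ltP; apply: fact_gt0.
move: Rp; rewrite E plus_INR => Rp.
field; lra.
Qed.

Lemma sum_INR_div (s : seq tree) (P : pred tree) (g : tree -> nat) (r : R) :
  \big[Rplus/R0]_(t <- s | P t) Rdiv (INR (g t)) r = Rdiv (INR (\sum_(t <- s | P t) g t)) r.
Proof.
elim: s => [|a s IH]; first by rewrite !big_nil /Rdiv Rmult_0_l.
rewrite !big_cons; case: (P a) => //.
by rewrite IH plus_INR /Rdiv Rmult_plus_distr_r.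
Qed.

Local Open Scope R_scope.

Lemma ln_lt_id (y : R) : Rlt 0 y -> Rlt (ln y) y.
Proof.
move=> y0; rewrite -{2}(ln_exp y); apply: ln_increasing => //.
have := exp_ineq1 y ltac:(lra); lra.
Qed.

Lemma ln_nonneg (x : R) : Rle 1 x -> Rle 0 (ln x).
Proof.
move=> x1; case: (Rle_lt_or_eq_dec _ _ x1) => h.
  rewrite -ln_1; left; apply: ln_increasing => //; lra.
by rewrite -h ln_1; lra.
Qed.

Lemma log_bound (c0 : R) : exists NL : nat, forall n k : nat, (NL <= n)%N -> (n <= k * k)%N ->
  Rle (Rdiv (ln (INR n)) c0) (INR k).
Proof.
case: (Rle_lt_dec c0 0) => hc.
  exists 1%N => n k n1 _.
  have lnn : Rle 0 (ln (INR n)) by apply: ln_nonneg; apply: (le_INR 1%N); apply/leP.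
  have ic : Rle (Rinv c0) 0.
    case: (Rle_lt_or_eq_dec _ _ hc) => h; last by rewrite h Rinv_0; lra.
    left; apply: Rinv_lt_0_compat; lra.
  have := pos_INR k; rewrite /Rdiv => hk.
  nra.
case: (INR_archimed 1 (4 / c0) ltac:(lra)) => M; rewrite Rmult_1_r => hM.
exists (M * M * (M * M))%N => n k hn hk.
have q0 : Rlt 0 (4 / c0) by apply: Rdiv_lt_0_compat; lra.
have x0 : Rlt 0 (INR n).
  apply: lt_0_INR; apply/ltP; apply: leq_trans hn.
  have : (0 < M)%N by apply/ltP; apply: INR_lt; rewrite /=; lra.
  by move=> M0; rewrite !muln_gt0 M0.
set x := INR n.
have {}x0 : 0 < x by exact: x0.
set y := sqrt (sqrt x).
have sx0 : Rlt 0 (sqrt x) by apply: sqrt_lt_R0.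
have y0 : Rlt 0 y by apply: sqrt_lt_R0.
have yy : y * y = sqrt x by rewrite /y sqrt_sqrt; lra.
have lnx : ln x = 4 * ln y.
  have e1 : ln x = ln (sqrt x) + ln (sqrt x).
    rewrite -(ln_mult _ _ sx0 sx0) sqrt_sqrt; first by [].
    exact: Rlt_le.
  have e2 : ln (sqrt x) = ln y + ln y by rewrite -(ln_mult _ _ y0 y0) yy.
  lra.
have lny := ln_lt_id y0.
have hyM : Rle (INR M) y.
  have e1 : Rle (INR (M * M * (M * M))) x by apply: le_INR; apply/leP.
  rewrite !mult_INR in e1.
  have e2 : Rle (sqrt (INR M * INR M * (INR M * INR M))) (sqrt x) by apply: sqrt_le_1_alt.
  rewrite sqrt_square in e2; last by have := pos_INR M; nra.
  have e3 : Rle (sqrt (INR M * INR M)) y by apply: sqrt_le_1_alt.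
  by rewrite sqrt_square in e3; last exact: pos_INR.
have hxk : Rle (sqrt x) (INR k).
  have e1 : Rle x (INR k * INR k) by rewrite -mult_INR; apply: le_INR; apply/leP.
  have e2 := sqrt_le_1_alt _ _ e1.
  by rewrite sqrt_square in e2; last exact: pos_INR.
rewrite lnx.
have h4 : Rle 4 (c0 * y).
  have : Rle (4 / c0) y by lra.
  move=> h; have := Rmult_le_compat_l c0 _ _ (ltac:(lra) : Rle 0 c0) h.
  by rewrite /Rdiv -Rmult_assoc (Rmult_comm c0) Rmult_assoc Rinv_r ?Rmult_1_r; lra.
apply: (Rle_trans _ (y * y)); last lra.
rewrite /Rdiv.
apply: (Rmult_le_reg_l c0); first lra.
have -> : c0 * (4 * ln y * / c0) = 4 * ln y by field; lra.
nra.
Qed.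

Lemma ratio_bound (q Rr S : nat) : (0 < Rr)%N -> (q * Rr <= 4 * S)%N ->
  INR q / 4 <= INR S / INR Rr.
Proof.
move=> R0 h.
have Rp : 0 < INR Rr by apply: lt_0_INR; apply/ltP.
have e1 : INR (q * Rr) <= INR (4 * S) by apply: le_INR; apply/leP.
rewrite !mult_INR in e1; simpl INR in e1.
apply: (Rmult_le_reg_r (4 * INR Rr)); first lra.
have -> : INR q / 4 * (4 * INR Rr) = INR q * INR Rr by field.
have -> : INR S / INR Rr * (4 * INR Rr) = 4 * INR S by field; lra.
lra.
Qed.

Lemma numeric_final (n s : nat) : (s * s <= n)%N -> (n < s.+1 * s.+1)%N -> (100 <= n)%N ->
  1 / 32 * sqrt (INR n) <= INR (s %/ 4) / 4.
Proof.
move=> h1 h2 h3.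
have hsq : sqrt (INR n) < INR s.+1.
  have e1 : INR n < INR s.+1 * INR s.+1 by rewrite -mult_INR; apply: lt_INR; apply/ltP.
  have e2 := sqrt_lt_1_alt _ _ (conj (pos_INR n) e1).
  by rewrite sqrt_square in e2; last exact: pos_INR.
have h10 : 10 <= sqrt (INR n).
  have e1 : 10 * 10 <= INR n.
    have -> : 10 * 10 = INR 100 by simpl; lra.
    by apply: le_INR; apply/leP.
  have e2 := sqrt_le_1_alt _ _ e1.
  by rewrite sqrt_square in e2; lra.
have hq : (s <= s %/ 4 * 4 + 3)%N.
  have := divn_eq s 4; have := ltn_pmod s (isT : (0 < 4)%N); lia.
have e3 : INR s <= INR (s %/ 4) * 4 + 3.
  have := le_INR _ _ (elimT leP hq).
  rewrite plus_INR mult_INR => h; simpl INR in h; lra.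
rewrite S_INR in hsq.
lra.
Qed.

Local Close Scope R_scope.

Lemma sum_bool_count_cond (T : Type) (s : seq T) (P b : pred T) :
  \sum_(i <- s | P i) (b i : nat) = count (fun i => P i && b i) s.
Proof. by elim: s => [|a s IH]; rewrite ?big_nil ?big_cons //= IH; case: (P a). Qed.

Theorem proposition2p9 (e : nat -> seq tree) :
  enumerates_polya e ->
  exists c : R, Rlt 0 c /\ exists N : nat, forall n : nat, (N <= n)%N ->
    Rle (Rmult c (sqrt (INR n)))
        (\big[Rplus/R0]_(t <- e n
                         | Rleb (log_base (Rinv (sigma_of e)) (INR n))
                                (INR (tree_size t)))
           (Rminus R1 (Rdiv (coef_S t n) (coef_T n)))).
Proof.
move=> He.
case: (log_bound (ln (Rinv (sigma_of e)))) => NL HL.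
exists (Rdiv 1 32); split; first lra.
exists (NL + 100) => n hn.
set P := fun t => Rleb (log_base (Rinv (sigma_of e)) (INR n)) (INR (tree_size t)).
have n0 : 0 < n by lia.
set s := Nat.sqrt n.
have [hs1 hs2] : s * s <= n /\ n < s.+1 * s.+1.
  by have := Nat.sqrt_spec' n; rewrite -/s => -[]; split; lia.
have s10 : 10 <= s by nia.
set I := iota s.+1 (s %/ 4).
have s4 : s %/ 4 * 4 <= s := leq_trunc_div s 4.
have HI : forall k, k \in I -> [/\ 1 <= k, k < n, n <= k * k.+1 & k * k.+1 <= 2 * n].
  move=> k; rewrite mem_iota => /andP [k1 k2].
  have k3 : 4 * k <= 5 * s + 3 by lia.
  split; [lia | nia | nia | nia].
have HP : forall t, tree_size t \in I -> P t.
  move=> t; rewrite mem_iota => /andP [k1 _].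
  rewrite /P /Rleb /log_base; case: Rle_dec => // H; exfalso; apply: H.
  apply: HL; first lia.
  nia.
have Hn : forall k, k \in I -> k <= n by move=> k /HI [_ /ltnW].
rewrite (eq_bigr (fun t => Rdiv (INR (Ht n t)) (INR (Rn n)))); last by move=> t _; apply: ratio.
rewrite sum_INR_div.
set C := \sum_(f : {ffun 'I_n -> 'I_n} | is_rectree f) \sum_(k <- I) (0 < X f k).
have HC : C <= \sum_(t <- e n | P t) Ht n t.
  rewrite /Ht exchange_big /=; apply: leq_sum => f Hf.
  rewrite [X in _ <= X]sum_bool_count_cond; apply: count_bound => //; exact: iota_uniq.
have HM := main_count n0 HI.
rewrite size_iota -/C in HM.
have Rp : Rlt 0 (INR (Rn n)) by apply: lt_0_INR; apply/ltP; apply: Rn_pos.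
have H1 : Rle (Rdiv (INR (s %/ 4)) 4) (Rdiv (INR (\sum_(t <- e n | P t) Ht n t)) (INR (Rn n))).
  apply: ratio_bound; first exact: Rn_pos.
  apply: (leq_trans HM); rewrite leq_mul2l; apply/orP; right; exact: HC.
apply: (Rle_trans _ _ _ _ H1).
apply: numeric_final => //; lia.
Qed.
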